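(* Let $G=(V,E)$ be a finite simple undirected graph, $G_0:=G$, and let $W_1,\dots,W_r$ be distinct subsets of $V$ such that for every $t\in\{1,\dots,r\}$, $W_t$ is a clique of $G_{t-1}$ with $|W_t|\ge2$ and $G_t:=G_{t-1}\mid W_t$. Let $W_{r+1}\subseteq V$ be a clique of $G_r$. For $t=r,r-1,\dots,1$ define recursively $P_t:=\{x\in STAB(G_{t-1})\mid x_{W_t}=0\}$ and \[ \lambda^B_t:=\max\Big\{x_{W_{r+1}}+\sum_{i=t+1}^r\lambda^B_i(x_{W_i}-1)\ \Big|\ x\in P_t\Big\}-1 . \] Then the inequality \[ x_{W_{r+1}}+\sum_{t=1}^r\lambda^B_t(x_{W_t}-1)\le 1 \] is valid for $STAB(G)$.
   Context: For a graph $G=(V,E)$, $\mathcal S(G)\subseteq\{0,1\}^V$ is the set of characteristic vectors of stable sets of $G$, and $STAB(G)=\mathrm{conv}\,\mathcal S(G)$. For $W\subseteq V$ and $x\in\mathbb R^V$, $x_W=\sum_{v\in W}x_v$. $N(v)$ is the neighborhood of $v$. The clique projection of a clique $W$ ($|W|\ge2$) of a graph $H=(V,E_H)$ is $H\mid W=(V,E_H\cup\{uv\notin E_H\mid u\ne v,\ W\subseteq N_H(u)\cup N_H(v)\})$. An inequality is valid for a set if every point of the set satisfies it. *)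

(* Defs.v *)
From mathcomp Require Import all_boot all_order all_algebra.
Set Implicit Arguments. Unset Strict Implicit. Unset Printing Implicit Defensive.
Import Order.TTheory GRing.Theory Num.Theory.
Local Open Scope ring_scope.

Definition simple_graph (V : finType) (e : rel V) : Prop :=
  (forall u v, e u v = e v u) /\ (forall u, ~~ e u u).

Definition nbhd (V : finType) (e : rel V) (v : V) : {set V} := [set w | e v w].

Definition clique (V : finType) (e : rel V) (W : {set V}) : Prop :=
  forall u v, u \in W -> v \in W -> u != v -> e u v.

Definition stable (V : finType) (e : rel V) (S : {set V}) : Prop :=
  forall u v, u \in S -> v \in S -> ~~ e u v.

Definition clique_proj (V : finType) (e : rel V) (W : {set V}) : rel V :=
  fun u v => e u v || ((u != v) && (W \subset nbhd e u :|: nbhd e v)).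

Definition xsum (R : numDomainType) (V : finType) (x : V -> R) (W : {set V}) : R :=
  \sum_(v in W) x v.

Definition chi (R : numDomainType) (V : finType) (S : {set V}) : V -> R :=
  fun v => if v \in S then 1 else 0.

Definition inSTAB (R : numDomainType) (V : finType) (e : rel V) (x : V -> R) : Prop :=
  exists c : {set V} -> R,
    (forall S, 0 <= c S) /\ (\sum_(S : {set V}) c S = 1) /\
    (forall S, c S != 0 -> stable e S) /\
    (forall v, x v = \sum_(S : {set V}) c S * chi R S v).

Fixpoint gseq (V : finType) (e : rel V) (W : nat -> {set V}) (t : nat) : rel V :=
  match t with
  | 0 => e
  | t'.+1 => clique_proj (gseq e W t') (W t'.+1)
  end.

Definition is_max (R : numDomainType) (T : Type) (P : T -> Prop) (f : T -> R) (m : R) : Prop :=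
  (exists2 x, P x & f x = m) /\ (forall x, P x -> f x <= m).

(* Main.v *)
Require Import Defs.
From mathcomp Require Import all_boot all_order all_algebra.
From mathcomp Require Import ring lra zify.
Import Order.TTheory GRing.Theory Num.Theory.
Local Open Scope ring_scope.

Section Aux.
Variables (R : realFieldType) (V : finType).

Definition FF (W : nat -> {set V}) (lam : nat -> R) (r t : nat) (x : V -> R) : R :=
  xsum x (W r.+1) + \sum_(t.+1 <= i < r.+1) lam i * (xsum x (W i) - 1).

Lemma xsum_chi (g : rel V) (W S : {set V}) :
  clique g W -> stable g S ->
  (xsum (chi R S) W = 0 /\ (forall w, w \in W -> w \notin S)) \/
  (xsum (chi R S) W = 1 /\ exists w, w \in W /\ w \in S).
Proof.
move=> cW sS.
case: (pickP (fun w => (w \in W) && (w \in S))) => [w /andP[wW wS] | none].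
  right; split; last by exists w.
  rewrite /xsum (bigD1 w) //= big1 ?addr0 /chi ?wS // => v /andP[vW vw].
  case: ifP => // vS; exfalso.
  by move: (sS _ _ vS wS); rewrite (cW _ _ vW wW vw).
left; split.
  rewrite /xsum big1 // => v vW; rewrite /chi; case: ifP => // vS.
  by move: (none v); rewrite vW vS.
by move=> w wW; apply/negP => wS; move: (none w); rewrite wW wS.
Qed.

Lemma stable_proj (g : rel V) (W S : {set V}) w :
  stable g S -> w \in W -> w \in S -> stable (clique_proj g W) S.
Proof.
move=> sS wW wS u v uS vS; rewrite /clique_proj negb_or (sS _ _ uS vS) /=.
apply/negP => /andP[_ /subsetP /(_ w wW)].
rewrite in_setU !inE.
by rewrite (negbTE (sS _ _ uS wS)) (negbTE (sS _ _ vS wS)).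
Qed.

Lemma chi_STAB (g : rel V) (S : {set V}) : stable g S -> inSTAB g (chi R S).
Proof.
move=> sS; exists (fun T => if T == S then 1 else 0); split; [|split; [|split]].
- by move=> T; case: ifP.
- by rewrite (bigD1 S) //= eqxx big1 ?addr0 // => T /negbTE ->.
- move=> T; have [->|_] := eqVneq T S; first by move=> _.
  by rewrite eqxx.
- move=> v; rewrite (bigD1 S) //= eqxx mul1r big1 ?addr0 // => T /negbTE ->.
  by rewrite mul0r.
Qed.

Lemma xsum_lin (c : {set V} -> R) (x : V -> R) (W : {set V}) :
  (forall v, x v = \sum_(S : {set V}) c S * chi R S v) ->
  xsum x W = \sum_(S : {set V}) c S * xsum (chi R S) W.
Proof.
move=> Hx; rewrite /xsum; under eq_bigr => v _ do rewrite Hx.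
rewrite exchange_big; apply: eq_bigr => S _; by rewrite mulr_sumr.
Qed.

Lemma xsum_lin1 (c : {set V} -> R) (x : V -> R) (W : {set V}) :
  (forall v, x v = \sum_(S : {set V}) c S * chi R S v) ->
  \sum_(S : {set V}) c S = 1 ->
  xsum x W - 1 = \sum_(S : {set V}) c S * (xsum (chi R S) W - 1).
Proof.
move=> Hx Hc; rewrite (xsum_lin _ _ _ Hx).
under [RHS]eq_bigr => S _ do rewrite mulrBr mulr1.
by rewrite sumrB Hc.
Qed.

Lemma FF_lin (c : {set V} -> R) (x : V -> R) W lam r t :
  (forall v, x v = \sum_(S : {set V}) c S * chi R S v) ->
  \sum_(S : {set V}) c S = 1 ->
  FF W lam r t x = \sum_(S : {set V}) c S * FF W lam r t (chi R S).
Proof.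
move=> Hx Hc; rewrite /FF.
under [RHS]eq_bigr => S _ do rewrite mulrDr mulr_sumr.
rewrite big_split /=; congr (_ + _); first exact: xsum_lin.
rewrite [RHS]exchange_big; apply: eq_bigr => i _.
rewrite (xsum_lin1 _ _ _ Hx Hc) mulr_sumr; apply: eq_bigr => S _.
by rewrite mulrCA.
Qed.

End Aux.
Arguments FF {R V}.
Arguments xsum_chi R {V g W S}.
Arguments chi_STAB R {V g S}.
Arguments stable_proj {V g W S w}.
Arguments FF_lin {R V} c x W lam r t.

Theorem lemma4 (R : realFieldType) (V : finType) (e : rel V) (r : nat)
    (W : nat -> {set V}) (lam : nat -> R) :
  simple_graph e ->
  (forall s t, (1 <= s <= r)%N -> (1 <= t <= r)%N -> s != t -> W s != W t) ->
  (forall t, (1 <= t <= r)%N ->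
     clique (gseq e W t.-1) (W t) /\ (2 <= #|W t|)%N) ->
  clique (gseq e W r) (W r.+1) ->
  (forall t, (1 <= t <= r)%N ->
     is_max (fun x : V -> R => inSTAB (gseq e W t.-1) x /\ xsum x (W t) = 0)
       (fun x => xsum x (W r.+1) +
                 \sum_(t.+1 <= i < r.+1) lam i * (xsum x (W i) - 1))
       (lam t + 1)) ->
  forall x : V -> R, inSTAB e x ->
    xsum x (W r.+1) + \sum_(1 <= t < r.+1) lam t * (xsum x (W t) - 1) <= 1.
Proof.
move=> _ _ Hcl Hlast Hmax.
have key : forall k, (k <= r)%N -> forall S, stable (gseq e W (r - k)) S ->
    FF W lam r (r - k) (chi R S) <= 1.
  elim=> [|k IH] kr S sS.
    rewrite subn0 /FF big_geq // addr0 in sS *.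
    have [[-> _]|[-> _]] := xsum_chi R Hlast sS; lra.
  have ht : (r - k = (r - k.+1).+1)%N by lia.
  have t1 : (1 <= (r - k.+1).+1 <= r)%N by lia.
  have [cW _] := Hcl _ t1.
  rewrite /= in cW.
  have FFs : forall y, FF W lam r (r - k.+1) y =
      FF W lam r (r - k) y + lam (r - k.+1).+1 * (xsum y (W (r - k.+1).+1) - 1).
    move=> y; rewrite /FF ht (big_ltn (m := (r - k.+1).+1)); last by lia.
    ring.
  rewrite FFs.
  have [[x0 _]|[x1 [w [wW wS]]]] := xsum_chi R cW sS.
    have [_ ub] := Hmax _ t1.
    have := ub (chi R S) (conj (chi_STAB R sS) x0).
    rewrite x0 -/(FF W lam r (r - k.+1).+1 (chi R S)) -ht => h; lra.
  rewrite x1 subrr mulr0 addr0; apply: IH; first by lia.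
  rewrite ht /=; exact: stable_proj sS wW wS.
move=> x [c [c0 [c1 [cs Hx]]]].
have := FF_lin c x W lam r 0 Hx c1; rewrite /FF => ->.
rewrite -[X in _ <= X]c1; apply: ler_sum => S _.
have [->|nz] := eqVneq (c S) 0; first by rewrite !mul0r.
rewrite -[X in _ <= X]mulr1; apply: ler_wpM2l => //.
have := key r (leqnn r) S; rewrite subnn /FF; apply; exact: cs.
Qed.
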